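(* Let $\mathbf M=(m_1,\dots,m_r)$ be a Motzkin path and suppose the seed $(\mathbf x,B)$ is obtained from $(\mathbf x_0,B_0)$ by a finite sequence of $Q$-system mutations, each intermediate cluster being of the form $\mathbf x_{\mathbf M'}$ for a Motzkin path $\mathbf M'$, and the final cluster being $\mathbf x_{\mathbf M}$. Then $B=B(\mathbf M)$ where, for $1\le i,j\le r$ and with $C$ the Cartan matrix of $A_r$, $$B(\mathbf M)_{i,j}=(-1)^{\lfloor\frac{m_j+1}{2}\rfloor}\Bigl((-1)^{\lfloor\frac{m_i}{2}\rfloor}-(-1)^{\lfloor\frac{m_j}{2}\rfloor}\Bigr)\delta_{|i-j|,1},$$ $$B(\mathbf M)_{i,j+r}=(-1)^{\lfloor\frac{m_i+1}{2}\rfloor+\lfloor\frac{m_j}{2}\rfloor+1}C_{i,j},\qquad B(\mathbf M)_{i+r,j}=(-1)^{\lfloor\frac{m_i}{2}\rfloor+\lfloor\frac{m_j+1}{2}\rfloor}C_{i,j},$$ $$B(\mathbf M)_{i+r,j+r}=(-1)^{\lfloor\frac{m_i}{2}\rfloor}\Bigl((-1)^{\lfloor\frac{m_j+1}{2}\rfloor}-(-1)^{\lfloor\frac{m_i+1}{2}\rfloor}\Bigr)\delta_{|i-j|,1}.$$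
   Context: Fix $r\ge1$, $I_r=\{1,\dots,r\}$, and let $(R_{\alpha,n})_{0\le\alpha\le r+1,n\in\mathbb Z}$ be the $A_r$ $Q$-system: $R_{1,0},\dots,R_{r,0},R_{1,1},\dots,R_{r,1}$ are algebraically independent indeterminates, $R_{0,n}=R_{r+1,n}=1$, and $R_{\alpha,n+1}R_{\alpha,n-1}=R_{\alpha,n}^2+R_{\alpha+1,n}R_{\alpha-1,n}$. $C$ is the $r\times r$ Cartan matrix of $A_r$ ($C_{ii}=2$, $C_{ij}=-1$ if $|i-j|=1$, $0$ otherwise). Cluster algebra conventions (rank $2r$, no coefficients): a seed is a pair $(\mathbf x,B)$ with $\mathbf x=(x_1,\dots,x_{2r})$ and $B$ a skew-symmetric integer $2r\times 2r$ matrix. The mutation $\mu_k$ replaces $x_k$ by $x_k'=x_k^{-1}\bigl(\prod_i x_i^{[B_{ik}]_+}+\prod_i x_i^{[-B_{ik}]_+}\bigr)$ ($[n]_+=\max(n,0)$), leaves other $x_j$ unchanged, and replaces $B$ by $B'$ with $B'_{ij}=-B_{ij}$ if $i=k$ or $j=k$, and $B'_{ij}=B_{ij}+\mathrm{sign}(B_{ik})[B_{ik}B_{kj}]_+$ otherwise. The initial seed is $\mathbf x_0=(R_{1,0},\dots,R_{r,0},R_{1,1},\dots,R_{r,1})$, $B_0=\begin{pmatrix}0&-C\\ C&0\end{pmatrix}$ (so $(B_0)_{i,j+r}=-C_{ij}$, $(B_0)_{i+r,j}=C_{ij}$). A Motzkin path is $\mathbf M=(m_1,\dots,m_r)\in\mathbb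 Z^r$ with $|m_{\alpha+1}-m_\alpha|\le1$ for $1\le\alpha<r$. Its cluster $\mathbf x_{\mathbf M}=(x_1,\dots,x_{2r})$ is defined by: for $\alpha\in I_r$, $x_\alpha$ is whichever of $R_{\alpha,m_\alpha},R_{\alpha,m_\alpha+1}$ has even second index and $x_{\alpha+r}$ is the one with odd second index (so $\mathbf x_{(0,\dots,0)}=\mathbf x_0$). A $Q$-system mutation is a mutation $\mu_k$ ($k=\alpha$ or $k=\alpha+r$) replacing a cluster entry $R_{\alpha,n\mp1}$ by $R_{\alpha,n\pm1}$, i.e. one that changes one $m_\alpha$ by $\pm1$. *)

(* Defs.v *)
From HB Require Import structures.
From mathcomp Require Import all_boot all_order all_algebra.
Set Implicit Arguments. Unset Strict Implicit. Unset Printing Implicit Defensive.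
Import Order.TTheory GRing.Theory Num.Theory.
Local Open Scope ring_scope.

Fixpoint mpoly (n : nat) : comNzRingType :=
  if n is n'.+1 then {poly (mpoly n')} else int.

Fixpoint meval (F : comNzRingType) (n : nat) : (nat -> F) -> mpoly n -> F :=
  match n return (nat -> F) -> mpoly n -> F with
  | 0 => fun _ p => (p : int)%:~R
  | n'.+1 => fun y p =>
      \sum_(i < size (p : {poly mpoly n'}))
         meval (fun j => y j.+1) (p : {poly mpoly n'})`_i * y 0%N ^+ i
  end.

Definition alg_indep (F : comNzRingType) (n : nat) (y : nat -> F) : Prop :=
  forall p : mpoly n, meval y p = 0 -> p = 0.

Definition is_Qsystem (F : fieldType) (r : nat) (R : nat -> int -> F) : Prop :=
  [/\ forall n, R 0%N n = 1,
      forall n, R r.+1 n = 1 &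
      forall (a : nat) (n : int), (1 <= a <= r)%N ->
        R a (n + 1) * R a (n - 1) = R a n ^+ 2 + R a.+1 n * R a.-1 n].

Definition Qinit (F : fieldType) (r : nat) (R : nat -> int -> F) (j : nat) : F :=
  if (j < r)%N then R j.+1 0 else R (j - r).+1 1.

(* indices are 0-based: i : 'I_r stands for alpha = i+1 *)
Definition cartan (r : nat) : 'M[int]_r :=
  \matrix_(i, j) (if i == j then 2 else
                  if (i.+1 == j :> nat) || (j.+1 == i :> nat) then -1 else 0).

Definition B0 (r : nat) : 'M[int]_(r + r) :=
  block_mx 0 (- cartan r) (cartan r) 0.

Definition mutB (n : nat) (k : 'I_n) (B : 'M[int]_n) : 'M[int]_n :=
  \matrix_(i, j) (if (i == k) || (j == k) then - B i j
                  else B i j + sgz (B i k) * Num.max (B i k * B k j) 0).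

Definition mutx (F : fieldType) (n : nat) (k : 'I_n) (B : 'M[int]_n)
    (x : 'I_n -> F) : 'I_n -> F :=
  fun j => if j == k then
      (x k)^-1 * (\prod_i x i ^+ `|Num.max (B i k) 0|%N
                  + \prod_i x i ^+ `|Num.max (- B i k) 0|%N)
    else x j.

(* M i stands for m_{i+1} *)
Definition motzkin (r : nat) (M : 'I_r -> int) : Prop :=
  forall i j : 'I_r, i.+1 = j :> nat -> `|M j - M i| <= 1.

(* label (alpha, n) of the cluster entry R_{alpha,n} at each position of x_M *)
Definition lab (r : nat) (M : 'I_r -> int) (p : 'I_(r + r)) : nat * int :=
  match split p with
  | inl i => (i.+1, if odd `|M i|%N then M i + 1 else M i)   (* even index *)
  | inr i => (i.+1, if odd `|M i|%N then M i else M i + 1)   (* odd index *)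
  end.

Definition clus (F : fieldType) (r : nat) (R : nat -> int -> F)
    (M : 'I_r -> int) : 'I_(r + r) -> F :=
  fun p => R (lab M p).1 (lab M p).2.

Definition qmut (r : nat) (M M' : 'I_r -> int) (k : 'I_(r + r)) : Prop :=
  exists (a : 'I_r) (n e : int),
    [/\ (e = 1 \/ e = -1), M' a = M a + e & (forall b, b != a -> M' b = M b)] /\
    [/\ lab M k = (a.+1, n - e), lab M' k = (a.+1, n + e) &
        (forall p, p != k -> lab M' p = lab M p)].

Fixpoint Bmut (r : nat) (k : nat -> 'I_(r + r)) (t : nat) : 'M[int]_(r + r) :=
  if t is t'.+1 then mutB (k t') (Bmut k t') else B0 r.

Definition negpow (z : int) : int := (-1) ^+ `|z|%N.
Definition fl2 (z : int) : int := (z %/ 2)%Z.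
Definition adj (r : nat) (i j : 'I_r) : int :=
  ((i.+1 == j :> nat) || (j.+1 == i :> nat))%:R.

Definition BM (r : nat) (M : 'I_r -> int) : 'M[int]_(r + r) :=
  block_mx
    (\matrix_(i, j) (negpow (fl2 (M j + 1)) *
                      (negpow (fl2 (M i)) - negpow (fl2 (M j))) * adj i j))
    (\matrix_(i, j) (negpow (fl2 (M i + 1) + fl2 (M j) + 1) * cartan r i j))
    (\matrix_(i, j) (negpow (fl2 (M i) + fl2 (M j + 1)) * cartan r i j))
    (\matrix_(i, j) (negpow (fl2 (M i)) *
                      (negpow (fl2 (M j + 1)) - negpow (fl2 (M i + 1))) * adj i j)).

(* Main.v *)
Require Import Defs.
From HB Require Import structures.
From mathcomp Require Import all_boot all_order all_algebra.
Import Order.TTheory GRing.Theory Num.Theory.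
Local Open Scope ring_scope.
Definition sgn (u : nat) : int := if (u < 2)%N then 1 else -1.

Lemma negpowE z : negpow z = (-1) ^ z.
Proof.
case: z => n /=; first by [].
by rewrite /negpow /= NegzE -exprnN invr_sign.
Qed.

Lemma negpowD a b : negpow (a + b) = negpow a * negpow b.
Proof. by rewrite !negpowE exprzDr // unitrN1. Qed.

Lemma negpow1 : negpow 1 = -1. Proof. by []. Qed.
Lemma negpow2 z : negpow (z * 2) = 1.
Proof. rewrite /negpow abszM mulnC exprM. have -> : (-1) ^+ `|2|%N = 1 :> int by []. by rewrite expr1n. Qed.

Definition ph (x : int) : nat := `|(x %% 4)%Z|%N.

Lemma ph_lt x : (ph x < 4)%N.
Proof.
rewrite /ph -ltz_nat gez0_abs ?modz_ge0 // ltz_pmod //.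
Qed.

Lemma ph_eq x : (x %% 4)%Z = (ph x)%:Z.
Proof. by rewrite /ph gez0_abs ?modz_ge0. Qed.

Lemma phE x : x = (x %/ 4)%Z * 4 + (ph x)%:Z.
Proof. by rewrite -ph_eq -divz_eq. Qed.

Lemma negpow_fl2 x : negpow (fl2 x) = sgn (ph x).
Proof.
have E : x = (x %/ 4)%Z * 2 * 2 + (ph x)%:Z by rewrite -mulrA {1}(phE x).
rewrite /fl2 {1}E (divzMDl _ _ (_ : 2 != 0)) // negpowD negpow2 mul1r.
have := ph_lt x; rewrite /sgn; case: (ph x) => [|[|[|[|]]]] //.
Qed.

Lemma negpow_ph x : negpow x = negpow (ph x).
Proof.
have E : x = (x %/ 4)%Z * 2 * 2 + (ph x)%:Z by rewrite -mulrA {1}(phE x).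
by rewrite {1}E negpowD negpow2 mul1r.
Qed.

Lemma ph1 x : ph (x + 1) = ((ph x).+1 %% 4)%N.
Proof.
have PI : injective Posz by move=> a b [].
apply: PI. rewrite -ph_eq. rewrite -modz_nat -[(ph x).+1]addn1 PoszD -ph_eq.
by rewrite modzDml.
Qed.
Definition ss (u : nat) : int := sgn u.
Definition tt' (u : nat) : int := sgn (u.+1 %% 4).
Definition cartc (c : nat) : int := if c == 0%N then 2 else if c == 1%N then -1 else 0.
Definition adjc (c : nat) : int := (c == 1%N)%:R.

Definition E (bi bj : bool) (u v c : nat) : int :=
  match bi, bj with
  | false, false => tt' v * (ss u - ss v) * adjc c
  | false, true => tt' u * ss v * (-1) * cartc c
  | true, false => ss u * tt' v * cartc c
  | true, true => ss u * (tt' v - tt' u) * adjc c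
  end.

Definition okd (u v : nat) : bool := [|| u == v, v == (u.+1 %% 4)%N | u == (v.+1 %% 4)%N].
Definition cb (bk : bool) (u : nat) : nat := nat_of_bool (bk (+) odd u).

Definition cond (bp bq bk e : bool) (up uq ua cpq cpa cqa : nat) : bool :=
  let ua' := if e then (ua.+1 %% 4)%N else ((ua + 3) %% 4)%N in
  let up' := if cpa == 0%N then ua' else up in
  let uq' := if cqa == 0%N then ua' else uq in
  [&& (cpa == 0%N) ==> (cpq == cqa), (cqa == 0%N) ==> (cpq == cpa),
      (cpq == 0%N) ==> (cpa == cqa), ~~ [&& cpq == 1%N, cpa == 1%N & cqa == 1%N],
      (cpa == 0%N) ==> (up == ua), (cqa == 0%N) ==> (uq == ua),
      (cpa == 1%N) ==> okd ua up && okd ua' up,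
      (cqa == 1%N) ==> okd ua uq && okd ua' uq,
      (cpq == 1%N) ==> okd up uq && okd up' uq' &
      ((if e then 1 else -1) == (cb bk ua')%:Z - (cb bk ua)%:Z)].

Definition concl (bp bq bk e : bool) (up uq ua cpq cpa cqa : nat) : bool :=
  let ua' := if e then (ua.+1 %% 4)%N else ((ua + 3) %% 4)%N in
  let up' := if cpa == 0%N then ua' else up in
  let uq' := if cqa == 0%N then ua' else uq in
  let pk := (bp == bk) && (cpa == 0%N) in
  let qk := (bq == bk) && (cqa == 0%N) in
  let Bpq := E bp bq up uq cpq in
  let Bpk := E bp bk up ua cpa in
  let Bkq := E bk bq ua uq cqa in
  (if pk || qk then - Bpq else Bpq + sgz Bpk * Num.max (Bpk * Bkq) 0)
   == E bp bq up' uq' cpq.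

Definition bools := [:: true; false].
Definition chk : bool :=
  all (fun bp => all (fun bq => all (fun bk => all (fun e =>
  all (fun up => all (fun uq => all (fun ua =>
  all (fun cpq => all (fun cpa => all (fun cqa =>
    cond bp bq bk e up uq ua cpq cpa cqa ==> concl bp bq bk e up uq ua cpq cpa cqa)
  (iota 0 3)) (iota 0 3)) (iota 0 3)) (iota 0 4)) (iota 0 4)) (iota 0 4))
  bools) bools) bools) bools.

Lemma chkT : chk. Proof. vm_compute. reflexivity. Qed.
Lemma chk_ok bp bq bk e up uq ua cpq cpa cqa :
  (up < 4)%N -> (uq < 4)%N -> (ua < 4)%N ->
  (cpq < 3)%N -> (cpa < 3)%N -> (cqa < 3)%N ->
  cond bp bq bk e up uq ua cpq cpa cqa -> concl bp bq bk e up uq ua cpq cpa cqa.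
Proof.
move=> h1 h2 h3 h4 h5 h6; have := chkT; rewrite /chk.
have bi : forall b, b \in bools by case.
have ii : forall u n, (u < n)%N -> u \in iota 0 n by move=> u n h; rewrite mem_iota.
move/allP/(_ bp (bi bp))/allP/(_ bq (bi bq))/allP/(_ bk (bi bk))/allP/(_ e (bi e)).
move/allP/(_ up (ii _ _ h1))/allP/(_ uq (ii _ _ h2))/allP/(_ ua (ii _ _ h3)).
move/allP/(_ cpq (ii _ _ h4))/allP/(_ cpa (ii _ _ h5))/allP/(_ cqa (ii _ _ h6)).
by move/implyP.
Qed.

Lemma phm1 x : ph (x - 1) = ((ph x + 3) %% 4)%N.
Proof.
have := ph1 (x - 1); rewrite subrK => ->.
have := ph_lt (x - 1); case: (ph (x - 1)) => [|[|[|[|n]]]] //.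
Qed.

Lemma odd_ph x : odd `|x|%N = odd (ph x).
Proof.
have h := negpow_ph x; move: h; rewrite /negpow absz_nat -[(-1) ^+ `|x|%N]signr_odd -[(-1) ^+ ph x]signr_odd.
by case: (odd `|x|%N); case: (odd (ph x)) => // /eqP.
Qed.
From Stdlib Require Import Lia.

Lemma okdC u v : okd u v = okd v u.
Proof. by rewrite /okd [u == v]eq_sym; congr (_ || _); apply: orbC. Qed.

Lemma okd_ph x y : `|y - x| <= 1 -> okd (ph x) (ph y).
Proof.
have [d ->] : exists d, y = x + d by exists (y - x); rewrite addrC subrK.
rewrite addrC addKr.
case: d => [[|[|n]]|n].
- by rewrite addr0 /okd eqxx.
- by rewrite ph1 /okd eqxx orbT.
- by rewrite ger0_norm // lez_nat.
- case: n => [|n].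
  + move=> _; rewrite /okd.
    have := ph1 (x + Negz 0); rewrite NegzE subrK => ->.
    by rewrite eqxx !orbT.
  + by rewrite NegzE normrN ger0_norm // lez_nat.
Qed.

Definition blk r (p : 'I_(r + r)) : bool := if split p is inr _ then true else false.
Definition idx r (p : 'I_(r + r)) : 'I_r := match split p with inl i => i | inr i => i end.
Definition rl r (i j : 'I_r) : nat :=
  if i == j then 0%N else if (i.+1 == j :> nat) || (j.+1 == i :> nat) then 1%N else 2%N.
Arguments blk {r}. Arguments idx {r}. Arguments rl {r}.

Lemma rl_lt r (i j : 'I_r) : (rl i j < 3)%N.
Proof. by rewrite /rl; case: (i == j) => //; case: (_ || _). Qed.

Lemma rlC r (i j : 'I_r) : rl i j = rl j i.
Proof. by rewrite /rl eq_sym orbC. Qed.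

Lemma rl0 r (i j : 'I_r) : (rl i j == 0%N) = (i == j).
Proof. by rewrite /rl; case: (i == j) => //; case: (_ || _). Qed.

Lemma rl1 r (i j : 'I_r) : rl i j == 1%N -> (i.+1 == j :> nat) || (j.+1 == i :> nat).
Proof. by rewrite /rl; case: (i == j) => //; case: (_ || _). Qed.

Lemma cartan_rl r (i j : 'I_r) : cartan r i j = cartc (rl i j).
Proof. by rewrite /cartan mxE /rl; case: (i == j) => //; case: (_ || _). Qed.

Lemma adj_rl r (i j : 'I_r) : adj i j = adjc (rl i j).
Proof.
rewrite /adj /rl /adjc; case: (i =P j) => [->|_]; last by case: (_ || _).
by rewrite !eqn_leq !ltnn.
Qed.

Lemma s_E x : negpow (fl2 x) = ss (ph x).
Proof. by rewrite negpow_fl2. Qed.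

Lemma t_E x : negpow (fl2 (x + 1)) = tt' (ph x).
Proof. by rewrite negpow_fl2 ph1. Qed.

Lemma BM_E r (M : 'I_r -> int) p q :
  BM M p q = E (blk p) (blk q) (ph (M (idx p))) (ph (M (idx q))) (rl (idx p) (idx q)).
Proof.
rewrite -(splitK p) -(splitK q) /blk /idx !unsplitK.
case: (split p) => i; case: (split q) => j /=;
  rewrite ?block_mxEul ?block_mxEur ?block_mxEdl ?block_mxEdr mxE /E.
- by rewrite t_E !s_E adj_rl.
- by rewrite !negpowD negpow1 t_E !s_E cartan_rl.
- by rewrite !negpowD t_E !s_E cartan_rl.
- by rewrite !t_E !s_E adj_rl.
Qed.

Lemma B0_E r p q :
  B0 r p q = E (blk p) (blk q) 0 0 (rl (idx p) (idx q)).
Proof.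
rewrite -(splitK p) -(splitK q) /blk /idx !unsplitK.
case: (split p) => i; case: (split q) => j /=;
  rewrite ?block_mxEul ?block_mxEur ?block_mxEdl ?block_mxEdr ?mxE /E.
- by rewrite /ss /tt' /= subrr mulr0 mul0r.
- by rewrite /ss /tt' /sgn /= /cartc /rl; case: (i == j) => //; case: (_ || _).
- by rewrite /ss /tt' /sgn /= /cartc /rl; case: (i == j) => //; case: (_ || _).
- by rewrite /ss /tt' /= subrr mulr0 mul0r.
Qed.

Lemma eqk r (p k : 'I_(r + r)) : (p == k) = (blk p == blk k) && (idx p == idx k).
Proof.
rewrite -(splitK p) -(splitK k) (inj_eq (can_inj unsplitK)) /blk /idx !unsplitK.
by case: (split p) => i; case: (split k) => j.
Qed.

Lemma arith (x n e c1 c2 : int) : x + c1 = n - e -> x + e + c2 = n + e -> e = c2 - c1.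
Proof.
move=> h1 h2.
have h3 : x + c2 = n by apply: (addIr e); rewrite -h2 addrAC.
subst n; move: h1; rewrite -addrA => /addrI ->.
by rewrite opprB addrC subrK.
Qed.

Lemma ifadd1 (b : bool) (x : int) : (if b then x + 1 else x) = x + (b : nat)%:Z.
Proof. by case: b; rewrite ?addr0. Qed.
Lemma ifadd2 (b : bool) (x : int) : (if b then x else x + 1) = x + (~~ b : nat)%:Z.
Proof. by case: b; rewrite ?addr0. Qed.

Lemma okM r (M : 'I_r -> int) (i j : 'I_r) :
  motzkin M -> rl i j == 1%N -> okd (ph (M i)) (ph (M j)).
Proof.
move=> hM /rl1 /orP [] /eqP h.
- by apply: okd_ph; apply: hM.
- by rewrite okdC; apply: okd_ph; apply: hM.
Qed.
Arguments okM {r M i j}.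

Lemma step r (M M' : 'I_r -> int) k :
  motzkin M -> motzkin M' -> qmut M M' k -> mutB k (BM M) = BM M'.
Proof.
move=> hM hM' [a [n [e [[he hMa hMb] [hl hl' _]]]]].
set eb := (e == 1).
have eE : e = (if eb then 1 else -1) by rewrite /eb; case: he => ->.
set ua := ph (M a).
set ua' := if eb then (ua.+1 %% 4)%N else ((ua + 3) %% 4)%N.
have phM' : forall b, ph (M' b) = if rl b a == 0%N then ua' else ph (M b).
  move=> b; rewrite rl0; case: (b =P a) => [->|/eqP nb]; last by rewrite hMb.
  rewrite hMa eE /ua' /ua; case: (eb); [exact: ph1 | exact: phm1].
have ha' : ua' = ph (M' a) by rewrite phM' /rl eqxx.
have [ik lk] : idx k = a /\
    ((if eb then 1 else -1) = (cb (blk k) ua')%:Z - (cb (blk k) ua)%:Z).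
  move: hl hl'; rewrite /lab /idx /blk.
  case: (split k) => i [hi h1] [_ h2];
    (have ia : i = a by apply: val_inj); subst i; split => //;
    rewrite -eE ha' /ua /cb -!odd_ph.
  - rewrite ifadd1 in h1; rewrite ifadd1 hMa in h2.
    rewrite !addFb hMa. exact: (@arith (M a) n e _ _ h1 h2).
  - rewrite ifadd2 in h1; rewrite ifadd2 hMa in h2.
    rewrite hMa. exact: (@arith (M a) n e _ _ h1 h2).
apply/matrixP => p q; rewrite /mutB mxE !BM_E !eqk ik -!rl0 !phM' ![rl (idx q) a]rlC.
apply/eqP.
apply: (@chk_ok (blk p) (blk q) (blk k) eb (ph (M (idx p))) (ph (M (idx q))) ua
   (rl (idx p) (idx q)) (rl (idx p) a) (rl a (idx q))
   (ph_lt _) (ph_lt _) (ph_lt _) (rl_lt _ _ _) (rl_lt _ _ _) (rl_lt _ _ _)).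
rewrite /cond -/ua'.
set i := idx p; set j := idx q.
have phi : rl i a != 0%N -> ph (M' i) = ph (M i) by rewrite phM' => /negbTE ->.
have phj : rl a j != 0%N -> ph (M' j) = ph (M j) by rewrite phM' rlC => /negbTE ->.
apply/andP; split.
  by apply/implyP; rewrite rl0 => /eqP ->.
apply/andP; split.
  by apply/implyP; rewrite rl0 => /eqP <-.
apply/andP; split.
  by apply/implyP; rewrite rl0 => /eqP ->; rewrite rlC.
apply/andP; split.
  apply/negP; case/and3P => /rl1 h1 /rl1 h2 /rl1 h3.
  by move: h1 h2 h3; do 3 (case/orP => /eqP ?); lia.
apply/andP; split.
  by apply/implyP; rewrite rl0 => /eqP ->.
apply/andP; split.
  by apply/implyP; rewrite rl0 => /eqP <-.
apply/andP; split.
  apply/implyP => h; have hn : rl i a != 0%N by rewrite (eqP h).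
  rewrite okdC (okM hM h) /= ha' -(phi hn) okdC.
  exact: (okM hM' h).
apply/andP; split.
  apply/implyP => h; have hn : rl a j != 0%N by rewrite (eqP h).
  rewrite (okM hM h) /= ha' -(phj hn).
  exact: okM hM' h.
apply/andP; split.
  apply/implyP => h; rewrite (okM hM h) /=.
  have -> : (if rl i a == 0%N then ua' else ph (M i)) = ph (M' i) by rewrite phM'.
  have -> : (if rl a j == 0%N then ua' else ph (M j)) = ph (M' j) by rewrite phM' rlC.
  exact: okM hM' h.
by rewrite lk.
Qed.

Lemma BM_ext r (M1 M2 : 'I_r -> int) : (forall i, M1 i = M2 i) -> BM M1 = BM M2.
Proof. by move=> h; apply/matrixP => p q; rewrite !BM_E !h. Qed.

Lemma BM_0 r (M : 'I_r -> int) : (forall i, M i = 0) -> BM M = B0 r.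
Proof.
move=> h; apply/matrixP => p q; rewrite BM_E B0_E !h.
by rewrite /ph.
Qed.

Theorem mainTheorem12 (F : fieldType) (r : nat) (R : nat -> int -> F)
    (m : 'I_r -> int) (T : nat) (Mseq : nat -> 'I_r -> int)
    (k : nat -> 'I_(r + r)) :
  (0 < r)%N ->
  is_Qsystem r R ->
  alg_indep (r + r) (Qinit r R) ->
  motzkin m ->
  (forall i, Mseq 0%N i = 0) ->
  (forall t, (t <= T)%N -> motzkin (Mseq t)) ->
  (forall t, (t < T)%N -> qmut (Mseq t) (Mseq t.+1) (k t)) ->
  (forall t, (t < T)%N ->
     forall p, mutx (k t) (Bmut k t) (clus R (Mseq t)) p = clus R (Mseq t.+1) p) ->
  (forall i, Mseq T i = m i) ->
  Bmut k T = BM m.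
Proof.
move=> _ _ _ _ h0 hmot hq _ hT.
have main : forall t, (t <= T)%N -> Bmut k t = BM (Mseq t).
  elim=> [|t IH] ht /=; first by rewrite (BM_0 _ _ h0).
  rewrite IH ?(ltnW ht) //.
  apply: step; [exact: hmot (ltnW ht) | exact: hmot ht | exact: hq ht].
by rewrite main // (BM_ext _ _ _ hT).
Qed.
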